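(* If $\omega\in\Lambda^s(n,n;r)$ and $\pi\in\Lambda^t(n,n;r)$, then $\xi_\omega\xi_\pi\in J^R_{s+t}(n,r)$.
   Context: $R$ commutative ring with identity, $n,r$ positive integers. $I(n,r)=\{1,\dots,n\}^r$; $\Lambda(n,n;r)$: $n\times n$ matrices of nonnegative integers with total sum $r$. For $i,j\in I(n,r)$, $\operatorname{wt}(i,j)_{st}=\#\{q:i_q=s,j_q=t\}$, $(i,j)\in\omega$ means $\operatorname{wt}(i,j)=\omega$. $S_R(n,r)=\mathrm{End}_{R\Sigma_r}((R^n)^{\otimes r})$ ($\Sigma_r$ permuting tensor positions: $e_i\sigma=e_{i\sigma}$, $(i\sigma)_q=i_{\sigma(q)}$); $\xi_\omega=\sum_{(i,j)\in\omega}e_{i,j}$, where $e_{i,j}e_k=\delta_{jk}e_i$. For $s\ge0$, $\Lambda^s(n,n;r)$ is the set of upper triangular $\omega\in\Lambda(n,n;r)$ with $\sum_{1\le k\le l\le n}(l-k)\omega_{kl}\ge s$, and $J^R_s(n,r)$ is the $R$-submodule of $S_R(n,r)$ spanned by $\{\xi_\omega:\omega\in\Lambda^s(n,n;r)\}$. *)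

(* Defs.v *)
From mathcomp Require Import all_boot all_order all_algebra.
Set Implicit Arguments. Unset Strict Implicit. Unset Printing Implicit Defensive.
Import GRing.Theory.

(* I(n,r) = {1..n}^r, indices shifted to 0..n-1 *)
Definition multi_index (n r : nat) := {ffun 'I_r -> 'I_n}.

Definition wt (n r : nat) (i j : multi_index n r) : 'M[nat]_n :=
  \matrix_(s, t) #|[set q : 'I_r | (i q == s) && (j q == t)]|.

Definition in_Lambda (n r : nat) (w : 'M[nat]_n) : Prop :=
  (\sum_(k < n) \sum_(l < n) w k l)%N = r.

Definition in_Lambda_s (n r s : nat) (w : 'M[nat]_n) : Prop :=
  [/\ in_Lambda r w,
      (forall k l : 'I_n, (l < k)%N -> w k l = 0%N) &
      (s <= \sum_(k < n) \sum_(l < n | (k <= l)%N) (l - k) * w k l)%N].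

(* Elements of End_R((R^n)^{\otimes r}) are represented by their matrices
   with respect to the basis (e_i)_{i in I(n,r)}: A k l is the coefficient
   of e_k in A(e_l). *)
Definition endo (R : comPzRingType) (n r : nat) :=
  multi_index n r -> multi_index n r -> R.

Definition eunit (R : comPzRingType) (n r : nat) (i j : multi_index n r)
  : endo R n r :=
  fun k l => if (k == i) && (l == j) then 1%R else 0%R.

Definition endo_mul (R : comPzRingType) (n r : nat) (A B : endo R n r)
  : endo R n r :=
  fun k l => (\sum_(m : multi_index n r) A k m * B m l)%R.

Definition xi (R : comPzRingType) (n r : nat) (w : 'M[nat]_n) : endo R n r :=
  fun k l => (\sum_(p : multi_index n r * multi_index n r | wt p.1 p.2 == w)
               eunit R p.1 p.2 k l)%R.

Definition in_J (R : comPzRingType) (n r s : nat) (A : endo R n r) : Prop :=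
  exists c : seq (R * 'M[nat]_n),
    (forall p, p \in c -> in_Lambda_s r s p.2) /\
    (forall k l, A k l = (\sum_(p <- c) p.1 * @xi R n r p.2 k l)%R).

(* Main.v *)
Require Import Defs.
From mathcomp Require Import all_boot all_order all_algebra.
From mathcomp Require Import fingroup perm.
Set Implicit Arguments. Unset Strict Implicit. Unset Printing Implicit Defensive.
Import GRing.Theory.

Section S.
Variables (n r : nat).
Implicit Types (i j k l m : multi_index n r).

Lemma wtE i j a b : wt i j a b = (\sum_(q < r) ((i q == a) && (j q == b)))%N.
Proof. by rewrite mxE -sum1_card big_mkcond /=; apply: eq_bigr => q _; rewrite inE; case: andP. Qed.

Definition sq i j : r.-tuple ('I_n * 'I_n) := [tuple (i q, j q) | q < r].

Lemma count_sq i j a b : count_mem (a, b) (sq i j) = wt i j a b.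
Proof.
rewrite mxE /= count_map cardE /enum_mem size_filter /enum_mem.
rewrite count_filter; apply: eq_count => q; rewrite /= inE xpair_eqE andbT.
by rewrite inE.
Qed.

Lemma wt_perm i j i' j' : wt i j = wt i' j' ->
  exists s : 'S_r, forall q, i' q = i (s q) /\ j' q = j (s q).
Proof.
move=> E.
have P : perm_eq (sq i' j') (sq i j).
  apply/allP => [[a b]] _; apply/eqP; by rewrite !count_sq E.
have [s Hs] := tuple_permP P.
exists s => q.
have := congr1 (fun x => nth (i q, j q) x q) Hs.
rewrite -!tnth_nth /sq !tnth_map !tnth_ord_tuple.
by case=> -> ->.
Qed.


Lemma wt_comp (s : 'S_r) i j i' j' :
  (forall q, i' q = i (s q)) -> (forall q, j' q = j (s q)) -> wt i' j' = wt i j.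
Proof.
move=> Hi Hj; apply/matrixP => a b; rewrite !wtE [in RHS](reindex_inj (@perm_inj _ s)) /=.
by apply: eq_bigr => q _; rewrite Hi Hj.
Qed.

Definition Nf (w p : 'M[nat]_n) k l :=
  (\sum_(m : multi_index n r) ((wt k m == w) && (wt m l == p)))%N.

Lemma Nf_inv w p k l k' l' : wt k l = wt k' l' -> Nf w p k l = Nf w p k' l'.
Proof.
move=> /wt_perm [s Hs].
pose h (m : multi_index n r) : multi_index n r := [ffun q => m (s q)].
have hinj : injective h.
  move=> m1 m2 /ffunP H; apply/ffunP => x.
  by have := H (s^-1 x)%g; rewrite !ffunE permKV.
rewrite /Nf [in RHS](reindex_inj hinj) /=; apply: eq_bigr => m _.
rewrite (@wt_comp s k m k' (h m)); first last.
- by move=> q; rewrite ffunE.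
- by move=> q; case: (Hs q).
rewrite (@wt_comp s m l (h m) l') //; first by move=> q; rewrite ffunE.
by move=> q; case: (Hs q).
Qed.

Lemma wt_total i j : (\sum_(a < n) \sum_(b < n) wt i j a b)%N = r.
Proof.
under eq_bigr => a _ do under eq_bigr => b _ do rewrite wtE.
under eq_bigr => a _ do rewrite exchange_big /=.
rewrite exchange_big /=.
rewrite -[r in RHS]card_ord -sum1_card; apply: eq_bigr => q _.
rewrite (bigD1 (i q)) //= [X in (_ + X)%N]big1; last first.
  by move=> a ha; rewrite big1 // => b _; rewrite eq_sym (negbTE ha).
rewrite addn0 (bigD1 (j q)) //= !eqxx big1 ?addn0 // => b hb.
by rewrite [_ == b]eq_sym (negbTE hb) andbF.
Qed.

Lemma wt_diff i j :
  (\sum_(a < n) \sum_(b < n) (b - a) * wt i j a b)%N = (\sum_(q < r) (j q - i q))%N.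
Proof.
under eq_bigr => a _ do under eq_bigr => b _ do rewrite wtE big_distrr /=.
under eq_bigr => a _ do rewrite exchange_big /=.
rewrite exchange_big /=; apply: eq_bigr => q _.
rewrite (bigD1 (i q)) //= [X in (_ + X)%N]big1; last first.
  by move=> a ha; rewrite big1 // => b _; rewrite eq_sym (negbTE ha) muln0.
rewrite addn0 (bigD1 (j q)) //= !eqxx muln1 big1 ?addn0 // => b hb.
by rewrite [_ == b]eq_sym (negbTE hb) andbF muln0.
Qed.

Lemma filt_sum (w : 'M[nat]_n) :
  (\sum_(k < n) \sum_(l < n | (k <= l)%N) (l - k) * w k l)%N =
  (\sum_(k < n) \sum_(l < n) (l - k) * w k l)%N.
Proof.
apply: eq_bigr => k _; rewrite big_mkcond /=; apply: eq_bigr => l _.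
case: leqP => // h; suff -> : (l - k = 0)%N by [].
by apply/eqP; rewrite subn_eq0 ltnW.
Qed.

Lemma lam_main (w p : 'M[nat]_n) s t i m j :
  wt i m = w -> wt m j = p -> in_Lambda_s r s w -> in_Lambda_s r t p ->
  in_Lambda_s r (s + t) (wt i j).
Proof.
move=> Hw Hp [_ Tw Sw] [_ Tp Sp].
have pos : forall i m q, (0 < wt i m (i q) (m q))%N.
  by move=> i0 m0 q; rewrite wtE (bigD1 q) //= !eqxx.
have le1 : forall q, (i q <= m q)%N.
  move=> q; rewrite leqNgt; apply/negP => h.
  by have := pos i m q; rewrite Hw Tw.
have le2 : forall q, (m q <= j q)%N.
  move=> q; rewrite leqNgt; apply/negP => h.
  by have := pos m j q; rewrite Hp Tp.
split.
- exact: wt_total.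
- move=> a b hab; rewrite wtE big1 // => q _.
  case: (boolP ((i q == a) && (j q == b))) => // /andP[/eqP ha /eqP hb].
  have := leq_trans (le1 q) (le2 q); rewrite ha hb leqNgt hab //.
- rewrite filt_sum wt_diff.
  move: Sw Sp; rewrite !filt_sum -Hw -Hp !wt_diff => Sw Sp.
  apply: leq_trans (leq_add Sw Sp) _; rewrite -big_split /=.
  apply: leq_sum => q _.
  by rewrite addnC addnBA // subnK.
Qed.
End S.
Local Open Scope ring_scope.

Lemma xiE (R : comPzRingType) n r (w : 'M[nat]_n) (k l : multi_index n r) :
  @xi R n r w k l = (wt k l == w)%:R.
Proof.
rewrite /xi big_mkcond /= (bigD1 (k, l)) //= big1 ?addr0.
  by rewrite /eunit !eqxx; case: (wt k l == w).
move=> [a b] hab; case: ifP => //= _; rewrite /eunit.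
case: (boolP ((k == a) && (l == b))) => // /andP[/eqP ha /eqP hb].
by move: hab; rewrite ha hb eqxx.
Qed.

Lemma prodE (R : comPzRingType) n r (w p : 'M[nat]_n) (k l : multi_index n r) :
  endo_mul (@xi R n r w) (@xi R n r p) k l = (Nf w p k l)%:R.
Proof.
rewrite /endo_mul /Nf natr_sum; apply: eq_bigr => m _.
by rewrite !xiE -natrM mulnb.
Qed.

Theorem proposition4p2 (R : comPzRingType) (n r s t : nat)
  (hn : (0 < n)%N) (hr : (0 < r)%N) (w p : 'M[nat]_n)
  (hw : in_Lambda_s r s w) (hp : in_Lambda_s r t p) :
  in_J (s + t) (endo_mul (@xi R n r w) (@xi R n r p)).
Proof.
pose T := (multi_index n r * multi_index n r)%type.
pose S := undup [seq wt x.1 x.2 | x <- [seq x <- enum {: T} | Nf w p x.1 x.2 != 0%N]].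
pose Nt (th : 'M[nat]_n) := if [pick x : T | wt x.1 x.2 == th] is Some x
  then Nf w p x.1 x.2 else 0%N.
exists [seq ((Nt th)%:R, th) | th <- S]; split.
  move=> c /mapP [th]; rewrite mem_undup => /mapP [x]; rewrite mem_filter.
  move=> /andP [Hnz _] -> -> /=.
  have [m /andP [/eqP h1 /eqP h2]] : exists m, (wt x.1 m == w) && (wt m x.2 == p).
    apply/existsP; apply: contraNT Hnz; rewrite negb_exists => /forallP H.
    by apply/eqP; apply: big1 => m _; rewrite (negbTE (H m)).
  exact: lam_main h1 h2 hw hp.
move=> k l; rewrite prodE big_map.
under eq_bigr => th _ do rewrite /= xiE.
have [inS | notS] := boolP (wt k l \in S).
  rewrite (bigD1_seq (wt k l)) ?undup_uniq //= eqxx mulr1 big1 ?addr0.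
    rewrite /Nt; case: pickP => [x /eqP hx | H]; first by rewrite (Nf_inv w p hx).
    by have := H (k, l); rewrite /= eqxx.
  by move=> th hth; rewrite eq_sym (negbTE hth) mulr0.
rewrite big1_seq; last first.
  move=> th /andP [_ hth]; case: eqP => [E|]; last by rewrite mulr0.
  by move: notS; rewrite E hth.
case: (boolP (Nf w p k l == 0%N)) => [/eqP -> // | hnz].
move: notS; rewrite mem_undup; case/mapP; exists (k, l) => //.
by rewrite mem_filter hnz mem_enum.
Qed.
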